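(* Let $p$ be a prime, $\mathbb{C}_p$ the field of complex $p$-adic numbers with norm $|\cdot|_p$, $a,b,c\in\mathbb{C}_p$ with $b\neq0$, $c\neq ab$, $f(x)=\frac{x+a}{bx+c}$ for $x\neq\hat x:=-c/b$. Fix a square root $\sqrt{(c-1)^2+4ab}$ and let $x_{1}=\frac{1-c+\sqrt{(c-1)^2+4ab}}{2b}$, $x_2=\frac{1-c-\sqrt{(c-1)^2+4ab}}{2b}$ (the fixed points of $f$). Assume $$\left|\frac{c-ab}{(bx_1+c)^2}\right|_p<1\qquad\text{and}\qquad\left|\frac{b}{bx_1+c}\right|_p<1.$$ Then the basin of attraction of $x_1$ is $$A(x_1)=\mathbb{C}_p\setminus\{\hat x,x_2\}.$$
   Context: For a fixed point $x_0$ of $f$, its basin of attraction is $A(x_0)=\{y\in\mathbb{C}_p: y_n\to x_0 \text{ as } n\to\infty\}$, where $y_n=f^n(y)$ is the $n$-th iterate of $y$ under $f$.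
   Formalization: The claim covers only points y whose iterates $y_n$ all differ from $\hat x$: for such y, y ∈ A(x₁) holds exactly when y ≠ x₂. Apart from conventions, each condition added here is assumed in the paper as well or is needed for the statement above to hold. *)

(* Defs.v *)
From mathcomp Require Import all_boot all_order all_algebra.
From mathcomp Require Import reals.
Set Implicit Arguments. Unset Strict Implicit. Unset Printing Implicit Defensive.
Import Order.TTheory GRing.Theory Num.Theory.
Local Open Scope ring_scope.

(* A "C_p-like" field: an algebraically closed field K of characteristic 0,
   equipped with a non-archimedean absolute value abs : K -> R extending the
   p-adic absolute value (|p| = 1/p), complete for abs. *)
Record is_padic_abs (R : realType) (K : fieldType) (p : nat) (abs : K -> R)
  : Prop := {
  abs_ge0 : forall x, 0 <= abs x;
  abs_eq0 : forall x, abs x = 0 <-> x = 0;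
  absM : forall x y, abs (x * y) = abs x * abs y;
  abs_ultra : forall x y, abs (x + y) <= Num.max (abs x) (abs y);
  abs_p : abs (p%:R) = (p%:R)^-1
}.

Definition char0 (K : fieldType) : Prop := forall n : nat, (n.+1)%:R != 0 :> K.

Definition cvg_abs (R : realType) (K : fieldType) (abs : K -> R)
  (u : nat -> K) (l : K) : Prop :=
  forall eps : R, 0 < eps -> exists N : nat, forall n : nat, (N <= n)%N ->
    abs (u n - l) < eps.

Definition cauchy_abs (R : realType) (K : fieldType) (abs : K -> R)
  (u : nat -> K) : Prop :=
  forall eps : R, 0 < eps -> exists N : nat, forall m n : nat,
    (N <= m)%N -> (N <= n)%N -> abs (u m - u n) < eps.

Definition complete_abs (R : realType) (K : fieldType) (abs : K -> R) : Prop :=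
  forall u, cauchy_abs abs u -> exists l, cvg_abs abs u l.

(* f(x) = (x+a)/(bx+c); only meaningful for x <> -c/b *)
Definition mobius (K : fieldType) (a b c : K) (x : K) : K := (x + a) / (b * x + c).

Definition in_basin (R : realType) (K : fieldType) (abs : K -> R)
  (f : K -> K) (xhat x0 y : K) : Prop :=
  (forall n : nat, iter n f y != xhat) /\ cvg_abs abs (fun n => iter n f y) x0.

(* Main.v *)
Require Import Defs.
From mathcomp Require Import all_boot all_order all_algebra.
From mathcomp Require Import reals.
From mathcomp Require Import ring lra.
Import Order.TTheory GRing.Theory Num.Theory.
Local Open Scope ring_scope.

Lemma bern (R : realType) (h : R) (n : nat) : 0 <= h -> 1 + n%:R * h <= (1 + h) ^+ n.
Proof.
move=> h0; elim: n => [|n IH]; first by rewrite mul0r addr0 expr0.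
rewrite exprS -natr1.
have hp : 0 <= (1 + h) ^+ n by apply: exprn_ge0; lra.
have : 0 <= n%:R * h :> R by apply: mulr_ge0.
nra.
Qed.

Lemma geo (R : realType) (q C eps : R) : 0 <= q -> q < 1 -> 0 <= C -> 0 < eps ->
  exists N, forall n, (N <= n)%N -> q ^+ n * C < eps.
Proof.
move=> q0 q1 C0 e0.
have [->|qn0] := eqVneq q 0.
  exists 1%N => -[|n] // _; by rewrite expr0n /= mul0r.
have qp : 0 < q by rewrite lt_def qn0.
set h := q^-1 - 1.
have hp : 0 < h by rewrite /h subr_gt0 invf_gt1.
have z : 0 <= C / (eps * h) by apply: divr_ge0 => //; apply: mulr_ge0; lra.
exists (Num.Def.archi_bound (C / (eps * h))) => n hn.
have := archi_boundP z.
have : (Num.Def.archi_bound (C / (eps * h)))%:R <= n%:R :> R by rewrite ler_nat.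
move=> h1 h2.
have h3 : C < eps * h * n%:R.
  rewrite -ltr_pdivrMl; last by apply: mulr_gt0.
  rewrite mulrC; lra.
have := @bern _ h n (ltW hp).
have e : 1 + h = q^-1 by rewrite /h addrC subrK.
rewrite e exprVn => hb.
have qnp : 0 < q ^+ n by apply: exprn_gt0.
have : C < eps * (q ^+ n)^-1.
  have : eps * h * n%:R <= eps * (q ^+ n)^-1.
    rewrite -mulrA; apply: ler_wpM2l; first lra.
    rewrite mulrC; lra.
  lra.
rewrite -(ltr_pM2l qnp) mulrCA mulfV ?mulr1 //; by rewrite gt_eqF.
Qed.

Ltac fs := field; repeat (apply/andP; split); try assumption.

Theorem theorem3p11 (R : realType) (K : closedFieldType) (p : nat)
  (abs : K -> R) (hp : prime p) (habs : @is_padic_abs R K p abs)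
  (hc0 : char0 K) (hcompl : complete_abs abs)
  (a b c s : K) (hb : b != 0) (hcab : c != a * b)
  (hs : s ^+ 2 = (c - 1) ^+ 2 + 4 * a * b) :
  let x1 := (1 - c + s) / (2 * b) in
  let x2 := (1 - c - s) / (2 * b) in
  let xhat := - c / b in
  abs ((c - a * b) / (b * x1 + c) ^+ 2) < 1 ->
  abs (b / (b * x1 + c)) < 1 ->
  forall y : K, (forall n : nat, iter n (mobius a b c) y != xhat) ->
    (in_basin abs (mobius a b c) xhat x1 y <-> y != x2).
Proof.
move=> x1 x2 xhat H1 H2 y hy.
have h2 : (2 : K) != 0 by have := hc0 1%N.
have h4 : (4 : K) != 0 by have := hc0 3%N.
have ha : a = (s ^+ 2 - (c - 1) ^+ 2) / (4 * b).
  by rewrite hs; fs.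
have I1 : forall x, b * x + c != 0 ->
    mobius a b c x - x1 = (b * x2 + c) * (x - x1) / (b * x + c).
  by move=> x hx; rewrite /mobius /x1 /x2 ha; fs.
have I2 : forall x, b * x + c != 0 ->
    mobius a b c x - x2 = (b * x1 + c) * (x - x2) / (b * x + c).
  by move=> x hx; rewrite /mobius /x1 /x2 ha; fs.
have I3 : (b * x1 + c) * (b * x2 + c) = c - a * b.
  by rewrite /x1 /x2 ha; fs.
have hcab' : c - a * b != 0 by rewrite subr_eq0.
have n1 : b * x1 + c != 0.
  by apply: contraNneq hcab' => e; rewrite -I3 e mul0r.
have n2 : b * x2 + c != 0.
  by apply: contraNneq hcab' => e; rewrite -I3 e mulr0.
have hne : forall x, x != xhat -> b * x + c != 0.
  move=> x; apply: contra => /eqP e; apply/eqP.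
  have ec : c = - (b * x) by apply/eqP; rewrite -addr_eq0 addrC e.
  by rewrite /xhat ec opprK; fs.
have abs1 : abs 1 = 1.
  have e := absM habs 1 1; rewrite mulr1 in e.
  have n0 : abs 1 != 0 by apply/eqP => /(abs_eq0 habs) /eqP; rewrite oner_eq0.
  by apply: (mulfI n0); rewrite mulr1 -e.
have absX : forall (z : K) n, abs (z ^+ n) = abs z ^+ n.
  move=> z; elim=> [|n IH]; first by rewrite !expr0.
  by rewrite !exprS (absM habs) IH.
set u := fun n => iter n (mobius a b c) y.
have uS : forall n, u n.+1 = mobius a b c (u n) by move=> n; rewrite /u iterS.
split.
  move=> [_ hcv]; apply/negP => /eqP ey.
  have ux : forall n, u n = x2.
    elim=> [|n IH]; first by rewrite /u /= ey.
    by rewrite uS IH; apply/eqP; rewrite -subr_eq0 I2 // subrr mulr0 mul0r.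
  have ex : x2 = x1.
    apply/eqP; rewrite -subr_eq0; apply/negPn/negP => hn.
    have hpos : 0 < abs (x2 - x1).
      rewrite lt_def (abs_ge0 habs) andbT; apply/eqP => /(abs_eq0 habs) /eqP.
      by apply/negP.
    have [N HN] := hcv _ hpos.
    by have := HN N (leqnn N); rewrite -/(u N) ux ltxx.
  move: H1; rewrite -I3 ex.
  have -> : (b * x1 + c) * (b * x1 + c) / (b * x1 + c) ^+ 2 = 1 by fs.
  by rewrite abs1 ltxx.
move=> yx2; split => //.
have hu : forall n, b * u n + c != 0 by move=> n; apply: hne; exact: hy.
have hne2 : forall n, u n != x2.
  elim=> [|n IH]; first by [].
  rewrite uS -subr_eq0 I2 // mulf_neq0 ?invr_eq0 ?mulf_neq0 ?subr_eq0 //.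
set lam := (b * x2 + c) / (b * x1 + c).
have hy2 : y - x2 != 0 by rewrite subr_eq0.
set r0 := (y - x1) / (y - x2).
have key : forall n, u n - x1 = lam ^+ n * r0 * (u n - x2).
  elim=> [|n IH].
    by rewrite expr0 mul1r /r0 /u /=; fs.
  rewrite uS I1 // I2 // IH /lam exprSr.
  have := hu n; have := hne2 n; move: (u n) => z hz hbz.
  fs.
have hlam : abs lam < 1.
  suff <- : (c - a * b) / (b * x1 + c) ^+ 2 = lam by [].
  by rewrite -I3 /lam; fs.
move=> eps e0.
set q := abs lam.
set D := abs (x1 - x2).
have q0 : 0 <= q by apply: (abs_ge0 habs).
have r00 : 0 <= abs r0 by apply: (abs_ge0 habs).
have D0 : 0 <= D by apply: (abs_ge0 habs).
have [N1 HN1] := @geo _ _ _ _ q0 hlam r00 ltr01.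
have [N2 HN2] := @geo _ _ _ _ q0 hlam (mulr_ge0 r00 D0) e0.
exists (maxn N1 N2) => n hn.
have hr1 := HN1 n (leq_trans (leq_maxl _ _) hn).
have hr2 := HN2 n (leq_trans (leq_maxr _ _) hn).
rewrite mulrA in hr2.
have hk : abs (u n - x1) = q ^+ n * abs r0 * abs (u n - x2).
  by rewrite key !(absM habs) absX.
have hm : abs (u n - x2) <= Num.max (abs (u n - x1)) D.
  have -> : u n - x2 = (u n - x1) + (x1 - x2) by rewrite addrA subrK.
  exact: (abs_ultra habs).
have d0 : 0 <= abs (u n - x1) by apply: (abs_ge0 habs).
have e0' : 0 <= abs (u n - x2) by apply: (abs_ge0 habs).
have rho0 : 0 <= q ^+ n * abs r0 by apply: mulr_ge0 => //; apply: exprn_ge0.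
rewrite -/(u n).
case: (leP (abs (u n - x1)) D) => hdD.
  rewrite max_r // in hm.
  have : q ^+ n * abs r0 * abs (u n - x2) <= q ^+ n * abs r0 * D.
    by apply: ler_wpM2l.
  lra.
rewrite max_l in hm; last exact: ltW.
have : q ^+ n * abs r0 * abs (u n - x2) <= q ^+ n * abs r0 * abs (u n - x1).
  by apply: ler_wpM2l.
rewrite -hk => h.
nra.
Qed.
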